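(* Let $(\curlywedge,\curlyvee)$ be the reference pair of a Morse sequence $W$ on a finite simplicial complex $K$, and let $\widehat{W}$ denote the set of simplices that are critical for $W$. If $\kappa \in \widehat{W}$ and $\nu \in K$, then: (1) $\kappa \in \curlywedge(\nu)$ if and only if there exists a $\curlywedge$-path from $\nu$ to $\kappa$; (2) $\kappa \in \curlyvee(\nu)$ if and only if there exists a $\curlyvee$-path from $\kappa$ to $\nu$.
   Context: $K$ is a finite simplicial complex; chains are taken with $\mathbb{Z}_2$ coefficients, so a $p$-chain is a set of $p$-simplices and sums are symmetric differences. For a $p$-simplex $\sigma$, $\partial(\sigma)$ is the set of its $(p-1)$-faces and $\delta(\sigma)$ is the set of $(p+1)$-simplices of $K$ containing $\sigma$; these extend linearly to chains. A Morse sequence $W=\langle \emptyset=K_0,\ldots,K_k=K\rangle$ is a sequence of simplicial complexes in which each $K_i$ is obtained from $K_{i-1}$ either by an elementary filling (adding one simplex $\nu$ that is a facet of $K_i$; then $\nu$ is called critical) or by an elementary expansion (adding $\sigma\subset\tau$ with $\dim\tau=\dim\sigma+1$, where $(\sigma,\tau)$ is a free pair of $K_i$, i.e. $\tau$ is the only face of $K_i$ containing $\sigma$; then $(\sigma,\tau)$ is a regular pair, $\sigma$ is lower regular and $\tau$ is upper regular). $\widehat{W}$ is the set of critical simplices. The reference map $\curlywedge$ and coreference map $\curlyvee$ are the unique maps assigning to each $p$-simplex of $K$ a set (a $\mathbb{Z}_2$-chain) of critical $p$-simplices, extended linearly to chains, such that $\curlywedge(\nu)=\curlyvee(\nu)=\nu$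 for every critical $\nu$; for every upper regular $\tau$, $\curlywedge(\tau)=0$ and $\curlywedge(\partial(\tau))=0$; and for every lower regular $\sigma$, $\curlyvee(\sigma)=0$ and $\curlyvee(\delta(\sigma))=0$. The pair $(\curlywedge,\curlyvee)$ is called the reference pair of $W$. A gradient path in $W$ from $\sigma_0$ to $\sigma_k$ is a sequence $\langle\sigma_0,\tau_0,\ldots,\sigma_{k-1},\tau_{k-1},\sigma_k\rangle$ ($k\ge 0$) of $p$-simplices $\sigma_i$ and $(p+1)$-simplices $\tau_i$ such that each $(\sigma_i,\tau_i)$ is a regular pair of $W$ and $\sigma_{i+1}\in\partial(\tau_i)$ with $\sigma_{i+1}\neq\sigma_i$. A cogradient path in $W$ from $\tau_0$ to $\tau_k$ is a sequence $\langle\tau_0,\sigma_1,\tau_1,\ldots,\sigma_k,\tau_k\rangle$ ($k\ge0$) of $p$-simplices $\tau_i$ and $(p-1)$-simplices $\sigma_i$ such that each $(\sigma_i,\tau_i)$ is a regular pair of $W$ and $\tau_{i-1}\in\delta(\sigma_i)$ with $\tau_i\neq\tau_{i-1}$. A $\curlywedge$-path is a gradient path $\langle\sigma_0,\tau_0,\ldots,\tau_{k-1},\sigma_k\rangle$ such that $\sigma_k\in\curlywedge(\sigma_i)$ for every $i\in[0,k]$. A $\curlyvee$-path is a cogradient path $\langle\tau_0,\sigma_1,\tau_1,\ldots,\sigma_k,\tau_k\rangle$ such that $\tau_0\in\curlyvee(\tau_i)$ for every $i\in[0,k]$. *)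

(* Defs.v *)
From mathcomp Require Import all_boot.
Set Implicit Arguments. Unset Strict Implicit. Unset Printing Implicit Defensive.

Section Morse.
Variable V : finType.

(* A simplex is a nonempty finite set of vertices; a (finite) simplicial
   complex is a set of simplices closed under nonempty subsets.
   The dimension of a simplex s is #|s| - 1. *)
Definition simplex := {set V}.
Definition complex := {set simplex}.

Definition is_complex (K : complex) : Prop :=
  set0 \notin K /\
  forall s t : simplex, s \in K -> t \subset s -> t != set0 -> t \in K.

(* A step of a Morse sequence: inl nu = elementary filling adding nu,
   inr (sigma, tau) = elementary expansion adding sigma and tau. *)
Definition step := (simplex + (simplex * simplex))%type.
Definition added (x : step) : complex :=
  match x with inl nu => [set nu] | inr (s, t) => [set s; t] end.

Definition cx (W : seq step) : complex := \bigcup_(x <- W) added x.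

Definition valid_step (Kp : complex) (x : step) : Prop :=
  let Kn := Kp :|: added x in
  match x with
  | inl nu =>
      nu \notin Kp /\ is_complex Kn /\
      (forall y, y \in Kn -> ~~ (nu \proper y))
  | inr (s, t) =>
      s \notin Kp /\ t \notin Kp /\ s \proper t /\ #|t| = #|s|.+1 /\
      is_complex Kn /\
      (forall y, y \in Kn -> s \proper y -> y = t)
  end.

Fixpoint morse_from (Kp : complex) (W : seq step) : Prop :=
  match W with
  | [::] => True
  | x :: W' => valid_step Kp x /\ morse_from (Kp :|: added x) W'
  end.

Definition morse_seq (K : complex) (W : seq step) : Prop :=
  morse_from set0 W /\ cx W = K.

Definition critical (W : seq step) (nu : simplex) : bool := inl nu \in W.
Definition regular_pair (W : seq step) (s t : simplex) : bool := inr (s, t) \in W.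
Definition upper_regular (W : seq step) (t : simplex) : bool :=
  [exists s, regular_pair W s t].
Definition lower_regular (W : seq step) (s : simplex) : bool :=
  [exists t, regular_pair W s t].

Definition bnd (K : complex) (s : simplex) : complex :=
  [set f in K | (f \subset s) && (#|f|.+1 == #|s|)].
Definition cobnd (K : complex) (s : simplex) : complex :=
  [set c in K | (s \subset c) && (#|c| == #|s|.+1)].

(* Z_2-linear extension of a map from simplices to Z_2-chains *)
Definition chain_map (f : simplex -> complex) (c : complex) : complex :=
  [set k | odd #|[set s in c | k \in f s]|].

Definition ref_pair (K : complex) (W : seq step)
  (wedge vee : simplex -> complex) : Prop :=
  (forall s, s \in K -> wedge s \subset [set k | critical W k & #|k| == #|s|]) /\
  (forall s, s \in K -> vee s \subset [set k | critical W k & #|k| == #|s|]) /\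
  (forall nu, critical W nu -> wedge nu = [set nu] /\ vee nu = [set nu]) /\
  (forall t, upper_regular W t -> wedge t = set0 /\ chain_map wedge (bnd K t) = set0) /\
  (forall s, lower_regular W s -> vee s = set0 /\ chain_map vee (cobnd K s) = set0).

(* gradient path <sigma_0, tau_0, ..., tau_{k-1}, sigma_k> from x to y,
   encoded by x = sigma_0 and ps = [:: (tau_0, sigma_1); ...; (tau_{k-1}, sigma_k)] *)
Fixpoint gpath (K : complex) (W : seq step) (x : simplex)
    (ps : seq (simplex * simplex)) (y : simplex) : Prop :=
  match ps with
  | [::] => x = y
  | (t, s') :: r =>
      regular_pair W x t /\ s' \in bnd K t /\ s' <> x /\ gpath K W s' r y
  end.

(* cogradient path <tau_0, sigma_1, tau_1, ..., sigma_k, tau_k> from x to y,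
   encoded by x = tau_0 and ps = [:: (sigma_1, tau_1); ...; (sigma_k, tau_k)] *)
Fixpoint cgpath (K : complex) (W : seq step) (x : simplex)
    (ps : seq (simplex * simplex)) (y : simplex) : Prop :=
  match ps with
  | [::] => x = y
  | (s, t) :: r =>
      regular_pair W s t /\ x \in cobnd K s /\ t <> x /\ cgpath K W t r y
  end.

Definition wedge_path (K : complex) (W : seq step) (wedge : simplex -> complex)
    (x y : simplex) : Prop :=
  exists ps, gpath K W x ps y /\
    (forall s, s \in x :: map snd ps -> y \in wedge s).

Definition vee_path (K : complex) (W : seq step) (vee : simplex -> complex)
    (x y : simplex) : Prop :=
  exists ps, cgpath K W x ps y /\
    (forall t, t \in x :: map snd ps -> x \in vee t).

End Morse.

(* Main.v *)
Require Import Defs.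
From mathcomp Require Import all_boot.
Set Implicit Arguments. Unset Strict Implicit. Unset Printing Implicit Defensive.

Section Proofs.
Variable V : finType.

Lemma cx_nil : cx [::] = set0 :> complex V.
Proof. by rewrite /cx big_nil. Qed.
Lemma cx_cons (x : step V) s : cx (x :: s) = added x :|: cx s.
Proof. by rewrite /cx big_cons. Qed.
Lemma cx_cat (s1 s2 : seq (step V)) : cx (s1 ++ s2) = cx s1 :|: cx s2.
Proof. by rewrite /cx big_cat. Qed.

Lemma mem_cx (W : seq (step V)) x y : x \in W -> y \in added x -> y \in cx W.
Proof.
elim: W => [|z W IH] //; rewrite cx_cons in_cons inE => /orP[/eqP <- -> //|h hy].
by rewrite IH ?orbT.
Qed.

Lemma valid_nth (W : seq (step V)) Kp n d : morse_from Kp W -> n < size W ->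
  valid_step (Kp :|: cx (take n W)) (nth d W n).
Proof.
elim: W Kp n => [|x W IH] Kp [|n] //= [Hx HW] Hn.
- by rewrite cx_nil setU0.
- rewrite cx_cons setUA. exact: IH.
Qed.

Lemma take_nth_cx (W : seq (step V)) n d : n < size W ->
  cx (take n.+1 W) = cx (take n W) :|: added (nth d W n).
Proof. by move=> Hn; rewrite (take_nth d Hn) -cats1 cx_cat cx_cons cx_nil setU0. Qed.

Lemma parity (f : simplex V -> complex V) (c : complex V) s k :
  chain_map f c = set0 -> s \in c -> k \in f s ->
  exists2 s', s' \in c & (s' != s) && (k \in f s').
Proof.
move=> H sc ks.
have : k \notin chain_map f c by rewrite H inE.
rewrite inE => Hodd.
case: (boolP [exists s', [&& s' \in c, s' != s & k \in f s']]).
  by move=> /existsP [s' /and3P [a b d]]; exists s'; rewrite ?b ?d.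
move=> /existsPn Hn; exfalso; move: Hodd.
suff -> : [set s0 in c | k \in f s0] = [set s] by rewrite cards1.
apply/setP => y; rewrite !inE; case: (eqVneq y s) => [->|ne]; first by rewrite sc ks.
by have := Hn y; rewrite ne /=; case: (y \in c); case: (k \in f y).
Qed.

Lemma cgpath_rcons (K : complex V) W x ps y s t :
  cgpath K W x ps y -> regular_pair W s t -> y \in cobnd K s -> t <> y ->
  cgpath K W x (rcons ps (s, t)) t.
Proof.
elim: ps x => [|[a b] ps IH] x /=; first by move=> -> ? ? ?; do !split.
by move=> [h1 [h2 [h3 h4]]] *; do !split => //; apply: IH.
Qed.

Lemma cgpath_last (K : complex V) W x ps y :
  cgpath K W x ps y -> y \in x :: map snd ps.
Proof.
elim: ps x => [|[a b] ps IH] x /=; first by move=> ->; rewrite mem_head.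
by move=> [_ [_ [_ h]]]; rewrite in_cons (IH _ h) orbT.
Qed.

Variables (K : complex V) (W : seq (step V)) (wedge vee : simplex V -> complex V).
Hypotheses (HK : is_complex K) (HW : morse_seq K W) (HR : ref_pair K W wedge vee).

Let d : step V := inl set0.

Lemma wedge_fwd n : forall nu kappa, nu \in cx (take n W) -> kappa \in wedge nu ->
  wedge_path K W wedge nu kappa.
Proof.
have [Hw1 [Hv1 [Hc [Hup Hlo]]]] := HR.
elim: n => [|n IH] nu kappa; first by rewrite take0 cx_nil inE.
case: (ltnP n (size W)) => Hn; last first.
  move=> Hnu; apply: IH; rewrite take_oversize //; rewrite take_oversize in Hnu => //; exact: leqW.
rewrite (take_nth_cx d Hn) inE => /orP [Hnu|Hnu] Hk; first exact: IH.
have Hv := valid_nth d HW.1 Hn; rewrite set0U in Hv.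
have Hin : nth d W n \in W := mem_nth _ Hn.
have HinK : forall y, y \in added (nth d W n) -> y \in K.
  by move=> y hy; rewrite -HW.2; apply: mem_cx hy.
move: Hv Hin Hnu HinK; case: (nth d W n) => [c | [s t]] /= Hv Hin.
  rewrite inE => /eqP Ec _; subst nu.
  have [Ew _] := Hc c Hin.
  move: Hk; rewrite Ew inE => /eqP ->.
  exists [::]; split => // x; rewrite inE => /eqP ->; by rewrite Ew inE.
rewrite !inE => /orP[/eqP Es | /eqP Et] HinK; last first.
  have [Ew _] := Hup t (introT existsP (ex_intro _ s Hin)).
  by subst nu; rewrite Ew inE in Hk.
subst nu.
move: Hv => [Hs [Ht [Hst [Hcard [Hcx Hfree]]]]].
have [_ Ech] := Hup t (introT existsP (ex_intro _ s Hin)).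
have sK : s \in K by apply: HinK; rewrite !inE eqxx.
have sb : s \in bnd K t by rewrite inE sK (proper_sub Hst) Hcard eqxx.
have [s' s'b /andP [ne ks']] := parity Ech sb Hk.
move: (s'b); rewrite inE => /and3P [s'K s't /eqP cs'].
have s'n : s' != set0 by apply/eqP => E; move: HK.1; rewrite -E s'K.
have := Hcx.2 t s' ; rewrite !inE eqxx !orbT => /(_ isT s't s'n).
rewrite (negPf ne) /= => /orP [Htake| /eqP Et]; last first.
  by move: cs'; rewrite Et => /eqP; rewrite eqn_leq ltnn.
have [ps [Hp Hall]] := IH s' kappa Htake ks'.
exists ((t, s') :: ps); split; first by do !split => //; apply/eqP.
move=> x; rewrite in_cons => /orP [/eqP -> //|]; exact: Hall.
Qed.

Definition Pv n := forall nu kappa, nu \in K -> nu \notin cx (take n W) ->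
  kappa \in vee nu -> vee_path K W vee kappa nu.

Lemma vee_step n : Pv n.+1 -> Pv n.
Proof.
have [Hw1 [Hv1 [Hc [Hup Hlo]]]] := HR.
move=> IH nu kappa HnuK Hnu Hk.
case: (boolP (nu \in cx (take n.+1 W))) => Hnu1; last exact: IH.
case: (ltnP n (size W)) => Hn; last first.
  rewrite take_oversize in Hnu1; last exact: leqW.
  by rewrite take_oversize // Hnu1 in Hnu.
rewrite (take_nth_cx d Hn) inE (negPf Hnu) /= in Hnu1.
have Hv := valid_nth d HW.1 Hn; rewrite set0U in Hv.
have Hin : nth d W n \in W := mem_nth _ Hn.
have HinK : forall y, y \in added (nth d W n) -> y \in K.
  by move=> y hy; rewrite -HW.2; apply: mem_cx hy.
have Et1 := take_nth_cx d Hn.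
move: Hv Hin Hnu1 HinK Et1; case: (nth d W n) => [c | [s t]] /= Hv Hin.
  rewrite inE => /eqP Ec _ _; subst nu.
  have [_ Ev] := Hc c Hin.
  move: Hk; rewrite Ev inE => /eqP ->.
  exists [::]; split => // x; rewrite inE => /eqP ->; by rewrite Ev inE.
rewrite !inE => /orP[/eqP Es | /eqP Et] HinK Et1.
  have [Ev _] := Hlo s (introT existsP (ex_intro _ t Hin)).
  by subst nu; rewrite Ev inE in Hk.
subst nu.
move: Hv => [Hs [Ht [Hst [Hcard [Hcx Hfree]]]]].
have [_ Ech] := Hlo s (introT existsP (ex_intro _ t Hin)).
have tb : t \in cobnd K s by rewrite inE HnuK (proper_sub Hst) Hcard eqxx.
have [t' t'b /andP [ne kt']] := parity Ech tb Hk.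
move: (t'b); rewrite inE => /and3P [t'K st' /eqP ct'].
have nt' : t' \notin cx (take n.+1 W).
  apply/negP; rewrite Et1 => Ht'.
  have : s \proper t' by rewrite properEcard st' ct' ltnSn.
  by move=> /(Hfree t' Ht') E; rewrite E eqxx in ne.
have [ps [Hp Hall]] := IH t' kappa t'K nt' kt'.
exists (rcons ps (s, t)); split.
  apply: (cgpath_rcons Hp) => //; by move=> E; rewrite E eqxx in ne.
move=> x; rewrite map_rcons in_cons mem_rcons in_cons.
case/orP => [/eqP -> | /orP [/eqP -> //| h]]; apply: Hall; rewrite in_cons ?eqxx //.
by rewrite h orbT.
Qed.

Lemma vee_all : Pv 0.
Proof.
have base : Pv (size W).
  by move=> nu kappa HnuK; rewrite take_size HW.2 HnuK.
suff H : forall k, k <= size W -> Pv (size W - k) by have := H _ (leqnn _); rewrite subnn.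
elim => [|k IHk] h; first by rewrite subn0.
apply: vee_step; rewrite subnSK //; exact: IHk (ltnW h).
Qed.

End Proofs.

Theorem corollary1 (V : finType) (K : complex V) (W : seq (step V))
    (wedge vee : simplex V -> complex V) :
  is_complex K -> morse_seq K W -> ref_pair K W wedge vee ->
  forall kappa nu : simplex V, critical W kappa -> nu \in K ->
    (kappa \in wedge nu <-> wedge_path K W wedge nu kappa) /\
    (kappa \in vee nu <-> vee_path K W vee kappa nu).
Proof.
move=> HK HW HR kappa nu _ HnuK; split; split.
- apply: (wedge_fwd HK HW HR (n := size W)); by rewrite take_size HW.2.
- by move=> [ps [_ Hall]]; apply: Hall; rewrite mem_head.
- move=> Hk; have H0 : nu \notin cx (take 0 W) by rewrite take0 cx_nil inE.
  exact: (vee_all HW HR HnuK H0 Hk).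
- by move=> [ps [Hp Hall]]; apply: Hall; apply: cgpath_last Hp.
Qed.
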